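(* Let $\mathcal C$ be a monoidal category admitting reflexive coequalizers, whose monoidal product preserves reflexive coequalizers in the left (resp. right) variable. Let $T$ and $P$ be left (resp. right) Hopf monads on $\mathcal C$ which preserve reflexive coequalizers. Then every morphism of bimonads $f\colon T\to P$ is cross quotientable, and the cross quotient $P\div_f T$ is a left (resp. right) Hopf monad on $\mathcal C^T$.
   Context: Monoidal categories are strict. A bimonad is a monad $(T,\mu,\eta)$ with a comonoidal structure $T_2(X,Y)\colon T(X\otimes Y)\to TX\otimes TY$, $T_0\colon T\mathbb 1\to\mathbb 1$ such that $\mu,\eta$ are comonoidal; a bimonad morphism is a monad morphism that is a comonoidal natural transformation. $\mathcal C^T$ is the monoidal category of $T$-modules ($(M,r)\otimes(N,s)=(M\otimes N,(r\otimes s)T_2(M,N))$). A morphism of monads $f\colon T\to P$ induces $f^*\colon\mathcal C^P\to\mathcal C^T$, $(M,r)\mapsto(M,rf_M)$ (strict monoidal if $f$ is a bimonad morphism). $f$ is cross quotientable if $f^*$ is monadic (has a left adjoint and the comparison functor to modules over the induced monad is an equivalence); the cross quotient $P\div_f T$ is then the monad of $f^*$ on $\mathcal C^T$, which is a bimonad. A reflexive pair is a pair of parallel morphisms with a common section; a reflexive coequalizer is a coequalizer of such. Left (resp. right) Hopf monad: $H^l_{X,Y}=(TX\otimes\mu_Y)T_2(X,TY)$ (resp. $H^r_{X,Y}=(\mu_X\otimes TY)T_2(TX,Y)$) invertible for all $X,Y$. *)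

(* Defs.v *)
From Stdlib Require Import ProofIrrelevance.

Record Cat := {
  ob :> Type;
  hom : ob -> ob -> Type;
  idm : forall A, hom A A;
  cmp : forall A B C, hom B C -> hom A B -> hom A C;
  cmp_idl : forall A B (f : hom A B), cmp A B B (idm B) f = f;
  cmp_idr : forall A B (f : hom A B), cmp A A B f (idm A) = f;
  cmp_assoc : forall A B C D (f : hom A B) (g : hom B C) (h : hom C D),
      cmp A C D h (cmp A B C g f) = cmp A B D (cmp B C D h g) f }.
Arguments idm {c} A.
Arguments cmp {c A B C} g f.
Arguments cmp_idl {c A B} f.
Arguments cmp_idr {c A B} f.
Arguments cmp_assoc {c A B C D} f g h.
Notation "g ∘ f" := (cmp g f) (at level 40, left associativity).

Definition is_iso (C : Cat) (A B : C) (f : hom C A B) : Prop :=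
  exists g : hom C B A, g ∘ f = idm A /\ f ∘ g = idm B.
Arguments is_iso {C A B} f.

Definition castH {O : Type} (H : O -> O -> Type) {A A' B B' : O}
  (e1 : A = A') (e2 : B = B') (f : H A B) : H A' B' :=
  match e1 in _ = A0 return H A0 B' with
  | eq_refl => match e2 in _ = B0 return H A B0 with eq_refl => f end end.

Record Functor (C D : Cat) := {
  fo :> C -> D;
  fm : forall A B, hom C A B -> hom D (fo A) (fo B);
  fm_id : forall A, fm A A (idm A) = idm (fo A);
  fm_cmp : forall A B E (f : hom C A B) (g : hom C B E),
      fm A E (g ∘ f) = fm B E g ∘ fm A B f }.
Arguments fo {C D} f0 _ : rename.
Arguments fm {C D} f0 {A B} _ : rename.

Definition Fid (C : Cat) : Functor C C.
Proof.
  refine {| fo := fun X => X; fm := fun A B h => h |}; reflexivity.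
Defined.

Definition Fcomp (C D E : Cat) (F : Functor C D) (G : Functor D E) : Functor C E.
Proof.
  refine {| fo := fun X => G (F X); fm := fun A B h => fm G (fm F h) |}.
  - intros A. rewrite !fm_id. reflexivity.
  - intros A B E' f g. rewrite !fm_cmp. reflexivity.
Defined.

Definition NatIso (C D : Cat) (F G : Functor C D) : Prop :=
  exists a : forall X, hom D (F X) (G X),
    (forall X, is_iso (a X)) /\
    (forall X Y (h : hom C X Y), fm G h ∘ a X = a Y ∘ fm F h).

Arguments NatIso {C D} F G.

Arguments Fcomp {C D E} F G.

Definition IsEquivalence (C D : Cat) (K : Functor C D) : Prop :=
  exists G : Functor D C, NatIso (Fcomp K G) (Fid C) /\ NatIso (Fcomp G K) (Fid D).
Arguments IsEquivalence {C D} K.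

Record SMCat := {
  smcat :> Cat;
  tens : smcat -> smcat -> smcat;
  tensm : forall A B C D, hom smcat A B -> hom smcat C D ->
          hom smcat (tens A C) (tens B D);
  unit_ob : smcat;
  tensm_id : forall A C, tensm A A C C (idm A) (idm C) = idm (tens A C);
  tensm_cmp : forall A B E A' B' E' (f : hom smcat A B) (g : hom smcat B E)
      (f' : hom smcat A' B') (g' : hom smcat B' E'),
      tensm A E A' E' (g ∘ f) (g' ∘ f') = tensm B E B' E' g g' ∘ tensm A B A' B' f f';
  tens_assoc : forall A B C, tens (tens A B) C = tens A (tens B C);
  tens_unit_l : forall A, tens unit_ob A = A;
  tens_unit_r : forall A, tens A unit_ob = A;
  tensm_assoc : forall A A' B B' C C' (f : hom smcat A A') (g : hom smcat B B')
      (h : hom smcat C C'),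
      castH (hom smcat) (tens_assoc A B C) (tens_assoc A' B' C')
        (tensm _ _ _ _ (tensm _ _ _ _ f g) h)
      = tensm _ _ _ _ f (tensm _ _ _ _ g h);
  tensm_unit_l : forall A B (f : hom smcat A B),
      castH (hom smcat) (tens_unit_l A) (tens_unit_l B)
        (tensm _ _ _ _ (idm unit_ob) f) = f;
  tensm_unit_r : forall A B (f : hom smcat A B),
      castH (hom smcat) (tens_unit_r A) (tens_unit_r B)
        (tensm _ _ _ _ f (idm unit_ob)) = f }.
Arguments tens {s} A B.
Arguments tensm {s A B C D} f g.
Arguments unit_ob {s}.
Arguments tens_assoc {s} A B C.
Arguments tens_unit_l {s} A.
Arguments tens_unit_r {s} A.
Notation "A ⊗ B" := (tens A B) (at level 35, right associativity).
Notation "f ⊗m g" := (tensm f g) (at level 35, right associativity).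
Notation "'𝟙'" := unit_ob.

Record Monad (C : Cat) := {
  mob :> C -> C;
  mmap : forall A B, hom C A B -> hom C (mob A) (mob B);
  mmap_id : forall A, mmap A A (idm A) = idm (mob A);
  mmap_cmp : forall A B E (f : hom C A B) (g : hom C B E),
      mmap A E (g ∘ f) = mmap B E g ∘ mmap A B f;
  mu : forall A, hom C (mob (mob A)) (mob A);
  eta : forall A, hom C A (mob A);
  mu_nat : forall A B (f : hom C A B),
      mmap A B f ∘ mu A = mu B ∘ mmap _ _ (mmap A B f);
  eta_nat : forall A B (f : hom C A B), mmap A B f ∘ eta A = eta B ∘ f;
  mu_assoc : forall A, mu A ∘ mmap _ _ (mu A) = mu A ∘ mu (mob A);
  mu_eta_l : forall A, mu A ∘ eta (mob A) = idm (mob A);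
  mu_eta_r : forall A, mu A ∘ mmap _ _ (eta A) = idm (mob A) }.
Arguments mob {C} m _.
Arguments mmap {C} m {A B} f.
Arguments mu {C} m A.
Arguments eta {C} m A.

Record Bimonad (C : SMCat) := {
  bmon :> Monad C;
  T2 : forall X Y : C, hom C (bmon (X ⊗ Y)) (bmon X ⊗ bmon Y);
  T0 : hom C (bmon 𝟙) 𝟙;
  T2_nat : forall X X' Y Y' (f : hom C X X') (g : hom C Y Y'),
      T2 X' Y' ∘ mmap bmon (f ⊗m g) = (mmap bmon f ⊗m mmap bmon g) ∘ T2 X Y;
  T2_coassoc : forall X Y Z : C,
      (T2 X Y ⊗m idm (bmon Z)) ∘ T2 (X ⊗ Y) Z
      = castH (hom C) (f_equal (mob bmon) (eq_sym (tens_assoc X Y Z)))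
          (eq_sym (tens_assoc (bmon X) (bmon Y) (bmon Z)))
          ((idm (bmon X) ⊗m T2 Y Z) ∘ T2 X (Y ⊗ Z));
  T0_counit_l : forall X : C,
      castH (hom C) (f_equal (mob bmon) (tens_unit_l X)) (tens_unit_l (bmon X))
        ((T0 ⊗m idm (bmon X)) ∘ T2 𝟙 X) = idm (bmon X);
  T0_counit_r : forall X : C,
      castH (hom C) (f_equal (mob bmon) (tens_unit_r X)) (tens_unit_r (bmon X))
        ((idm (bmon X) ⊗m T0) ∘ T2 X 𝟙) = idm (bmon X);
  mu_T2 : forall X Y : C,
      T2 X Y ∘ mu bmon (X ⊗ Y)
      = (mu bmon X ⊗m mu bmon Y) ∘ T2 (bmon X) (bmon Y) ∘ mmap bmon (T2 X Y);
  mu_T0 : T0 ∘ mu bmon 𝟙 = T0 ∘ mmap bmon T0;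
  eta_T2 : forall X Y : C, T2 X Y ∘ eta bmon (X ⊗ Y) = eta bmon X ⊗m eta bmon Y;
  eta_T0 : T0 ∘ eta bmon 𝟙 = idm 𝟙 }.
Arguments Bimonad C : clear implicits.
Arguments bmon {C} b.
Arguments T2 {C} b X Y.
Arguments T0 {C} b.

Record BimonadMor (C : SMCat) (T P : Bimonad C) := {
  bmor :> forall X : C, hom C (T X) (P X);
  bmor_nat : forall X Y (h : hom C X Y), mmap P h ∘ bmor X = bmor Y ∘ mmap T h;
  bmor_mu : forall X, bmor X ∘ mu T X = mu P X ∘ mmap P (bmor X) ∘ bmor (T X);
  bmor_eta : forall X, bmor X ∘ eta T X = eta P X;
  bmor_T2 : forall X Y, T2 P X Y ∘ bmor (X ⊗ Y) = (bmor X ⊗m bmor Y) ∘ T2 T X Y;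
  bmor_T0 : T0 P ∘ bmor 𝟙 = T0 T }.
Arguments BimonadMor {C} T P.
Arguments bmor {C T P} b X.

Definition leftHopf (C : SMCat) (T : Bimonad C) : Prop :=
  forall X Y : C, is_iso ((idm (T X) ⊗m mu T Y) ∘ T2 T X (T Y)).
Definition rightHopf (C : SMCat) (T : Bimonad C) : Prop :=
  forall X Y : C, is_iso ((mu T X ⊗m idm (T Y)) ∘ T2 T (T X) Y).

Definition reflexive_pair (C : Cat) (A B : C) (f g : hom C A B) : Prop :=
  exists s : hom C B A, f ∘ s = idm B /\ g ∘ s = idm B.
Arguments reflexive_pair {C A B} f g.

Definition is_coequalizer (C : Cat) (A B Q : C) (f g : hom C A B) (q : hom C B Q)
  : Prop :=
  q ∘ f = q ∘ g /\
  forall (Z : C) (h : hom C B Z), h ∘ f = h ∘ g -> exists! u : hom C Q Z, u ∘ q = h.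
Arguments is_coequalizer {C A B Q} f g q.

Definition has_reflexive_coequalizers (C : Cat) : Prop :=
  forall (A B : C) (f g : hom C A B), reflexive_pair f g ->
    exists (Q : C) (q : hom C B Q), is_coequalizer f g q.

Definition tensor_preserves_rc_left (C : SMCat) : Prop :=
  forall (A B Q : C) (f g : hom C A B) (q : hom C B Q) (X : C),
    reflexive_pair f g -> is_coequalizer f g q ->
    is_coequalizer (f ⊗m idm X) (g ⊗m idm X) (q ⊗m idm X).

Definition tensor_preserves_rc_right (C : SMCat) : Prop :=
  forall (A B Q : C) (f g : hom C A B) (q : hom C B Q) (X : C),
    reflexive_pair f g -> is_coequalizer f g q ->
    is_coequalizer (idm X ⊗m f) (idm X ⊗m g) (idm X ⊗m q).

Definition monad_preserves_rc (C : Cat) (T : Monad C) : Prop :=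
  forall (A B Q : C) (f g : hom C A B) (q : hom C B Q),
    reflexive_pair f g -> is_coequalizer f g q ->
    is_coequalizer (mmap T f) (mmap T g) (mmap T q).

Record Alg (C : Cat) (T : Monad C) := {
  carrier : C;
  act : hom C (T carrier) carrier;
  act_eta : act ∘ eta T carrier = idm carrier;
  act_mu : act ∘ mmap T act = act ∘ mu T carrier }.
Arguments Alg {C} T.
Arguments carrier {C T} _.
Arguments act {C T} _.

Definition AlgHom (C : Cat) (T : Monad C) (M N : Alg T) : Type :=
  { h : hom C (carrier M) (carrier N) | act N ∘ mmap T h = h ∘ act M }.
Arguments AlgHom {C T} M N.

Lemma sig_ext {A : Type} {P : A -> Prop} (x y : sig P) :
  proj1_sig x = proj1_sig y -> x = y.
Proof.
  destruct x as [x px], y as [y py]; simpl; intros e; subst y.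
  f_equal; apply proof_irrelevance.
Qed.

Definition alg_id (C : Cat) (T : Monad C) (M : Alg T) : AlgHom M M.
Proof.
  exists (idm (carrier M)). rewrite mmap_id, cmp_idr, cmp_idl. reflexivity.
Defined.

Definition alg_cmp (C : Cat) (T : Monad C) (M N L : Alg T)
  (g : AlgHom N L) (f : AlgHom M N) : AlgHom M L.
Proof.
  exists (proj1_sig g ∘ proj1_sig f).
  destruct g as [g pg], f as [f pf]; simpl.
  rewrite mmap_cmp, cmp_assoc, pg, <- cmp_assoc, pf, cmp_assoc. reflexivity.
Defined.

Definition EM (C : Cat) (T : Monad C) : Cat.
Proof.
  refine {| ob := Alg T; hom := @AlgHom C T; idm := @alg_id C T;
            cmp := @alg_cmp C T |}.
  - intros A B f; apply sig_ext; simpl; apply cmp_idl.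
  - intros A B f; apply sig_ext; simpl; apply cmp_idr.
  - intros A B C' D f g h; apply sig_ext; simpl; apply cmp_assoc.
Defined.

Arguments EM {C} T.

Definition und (C : Cat) (T : Monad C) (M N : EM T) (h : hom (EM T) M N)
  : hom C (carrier M) (carrier N) := proj1_sig h.
Arguments und {C T M N} h.

Section AlgTens.
Variable C : SMCat.
Variable T : Bimonad C.

Lemma interchange (A B E A' B' E' : C) (f : hom C A B) (g : hom C B E)
      (f' : hom C A' B') (g' : hom C B' E') :
  (g ⊗m g') ∘ (f ⊗m f') = (g ∘ f) ⊗m (g' ∘ f').
Proof. symmetry; apply tensm_cmp. Qed.

Definition alg_tens (M N : Alg T) : Alg T.
Proof.
  refine {| carrier := carrier M ⊗ carrier N;
            act := (act M ⊗m act N) ∘ T2 T (carrier M) (carrier N) |}.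
  - rewrite <- cmp_assoc, eta_T2, interchange, !act_eta. apply tensm_id.
  - rewrite mmap_cmp, cmp_assoc, <- (cmp_assoc _ (T2 T _ _)), T2_nat.
    rewrite cmp_assoc, interchange, !act_mu, <- interchange.
    rewrite <- !cmp_assoc, mu_T2, !cmp_assoc. reflexivity.
Defined.

Definition alg_tensm (M M' N N' : Alg T) (h : hom (EM T) M M') (k : hom (EM T) N N')
  : hom (EM T) (alg_tens M N) (alg_tens M' N').
Proof.
  exists (und h ⊗m und k).
  destruct h as [h ph], k as [k pk]; unfold und; simpl.
  rewrite <- cmp_assoc, T2_nat, cmp_assoc, interchange, ph, pk.
  rewrite <- interchange, cmp_assoc. reflexivity.
Defined.
End AlgTens.
Arguments alg_tens {C T} M N.
Arguments alg_tensm {C T M M' N N'} h k.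

Section Fstar.
Variable C : SMCat.
Variables T P : Bimonad C.
Variable f : BimonadMor T P.

Definition fstar_ob (A : Alg P) : Alg T.
Proof.
  refine {| carrier := carrier A; act := act A ∘ f (carrier A) |}.
  - rewrite <- cmp_assoc, bmor_eta. apply act_eta.
  - rewrite mmap_cmp.
    transitivity (act A ∘ (f (carrier A) ∘ mmap T (act A)) ∘ mmap T (f (carrier A))).
    { rewrite !cmp_assoc; reflexivity. }
    rewrite <- bmor_nat.
    transitivity (act A ∘ mmap P (act A) ∘ (f (P (carrier A)) ∘ mmap T (f (carrier A)))).
    { rewrite !cmp_assoc; reflexivity. }
    rewrite <- bmor_nat, act_mu.
    transitivity (act A ∘ (mu P (carrier A) ∘ mmap P (f (carrier A)) ∘ f (T (carrier A)))).
    { rewrite !cmp_assoc; reflexivity. }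
    rewrite <- bmor_mu, !cmp_assoc. reflexivity.
Defined.

Definition fstar_hom (A B : Alg P) (h : hom (EM P) A B)
  : hom (EM T) (fstar_ob A) (fstar_ob B).
Proof.
  exists (und h). destruct h as [h ph]; unfold und; simpl.
  rewrite <- cmp_assoc, <- bmor_nat, cmp_assoc, ph, <- cmp_assoc. reflexivity.
Defined.

Definition fstar : Functor (EM P) (EM T).
Proof.
  refine (Build_Functor (EM P) (EM T) fstar_ob fstar_hom _ _).
  - intros A; apply sig_ext; reflexivity.
  - intros A B E g h; apply sig_ext; reflexivity.
Defined.

Definition fstar_str (A B : Alg P) :
  hom (EM T) (alg_tens (fstar A) (fstar B)) (fstar (alg_tens A B)).
Proof.
  exists (idm _); simpl.
  rewrite mmap_id, cmp_idr, cmp_idl, <- cmp_assoc, bmor_T2, cmp_assoc, interchange.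
  reflexivity.
Defined.

Definition fstar_str_inv (A B : Alg P) :
  hom (EM T) (fstar (alg_tens A B)) (alg_tens (fstar A) (fstar B)).
Proof.
  exists (idm _); simpl.
  rewrite mmap_id, cmp_idr, cmp_idl, <- cmp_assoc, bmor_T2, cmp_assoc, interchange.
  reflexivity.
Defined.
End Fstar.
Arguments fstar {C T P} f.
Arguments fstar_str {C T P} f A B.
Arguments fstar_str_inv {C T P} f A B.

Record Adjunction (D E : Cat) (U : Functor D E) := {
  ladj : Functor E D;
  adj_unit : forall X : E, hom E X (U (ladj X));
  adj_counit : forall A : D, hom D (ladj (U A)) A;
  adj_unit_nat : forall (X Y : E) (h : hom E X Y),
      fm U (fm ladj h) ∘ adj_unit X = adj_unit Y ∘ h;
  adj_counit_nat : forall (A B : D) (h : hom D A B),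
      h ∘ adj_counit A = adj_counit B ∘ fm ladj (fm U h);
  adj_tri_l : forall X : E, adj_counit (ladj X) ∘ fm ladj (adj_unit X) = idm (ladj X);
  adj_tri_r : forall A : D, fm U (adj_counit A) ∘ adj_unit (U A) = idm (U A) }.
Arguments Adjunction {D E} U.
Arguments ladj {D E U} a.
Arguments adj_unit {D E U} a X.
Arguments adj_counit {D E U} a A.

Section Induced.
Variables D E : Cat.
Variable U : Functor D E.
Variable adj : Adjunction U.
Local Notation F := (ladj adj).
Local Notation eps := (adj_counit adj).
Local Notation etaA := (adj_unit adj).

Definition induced_monad : Monad E.
Proof.
  refine {| mob := fun X => U (F X);
            mmap := fun A B h => fm U (fm F h);
            mu := fun X => fm U (eps (F X));
            eta := etaA |}.
  - intros A; rewrite !fm_id; reflexivity.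
  - intros A B C' f g; rewrite !fm_cmp; reflexivity.
  - intros A B f; rewrite <- !fm_cmp, adj_counit_nat; reflexivity.
  - intros A B f; apply adj_unit_nat.
  - intros A; rewrite <- !fm_cmp, <- adj_counit_nat; reflexivity.
  - intros A; apply adj_tri_r.
  - intros A; rewrite <- fm_cmp, adj_tri_l, fm_id; reflexivity.
Defined.

Definition comparison_ob (A : D) : Alg induced_monad.
Proof.
  refine (@Build_Alg E induced_monad (U A) (fm U (eps A)) _ _).
  - apply adj_tri_r.
  - simpl; rewrite <- !fm_cmp, <- adj_counit_nat; reflexivity.
Defined.

Definition comparison_hom (A B : D) (h : hom D A B) :
  hom (EM induced_monad) (comparison_ob A) (comparison_ob B).
Proof.
  exists (fm U h); simpl; rewrite <- !fm_cmp, adj_counit_nat; reflexivity.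
Defined.

Definition comparison : Functor D (EM induced_monad).
Proof.
  refine (Build_Functor D (EM induced_monad) comparison_ob comparison_hom _ _).
  - intros A; apply sig_ext; simpl; apply fm_id.
  - intros A B C' g h; apply sig_ext; simpl; apply fm_cmp.
Defined.
End Induced.
Arguments induced_monad {D E U} adj.
Arguments comparison {D E U} adj.

Definition monadic (D E : Cat) (U : Functor D E) : Prop :=
  inhabited (Adjunction U) /\ forall adj : Adjunction U, IsEquivalence (comparison adj).
Arguments monadic {D E} U.

Definition cross_quotientable (C : SMCat) (T P : Bimonad C) (f : BimonadMor T P)
  : Prop := monadic (fstar f).
Arguments cross_quotientable {C T P} f.

Section CrossQuotient.
Variable C : SMCat.
Variables T P : Bimonad C.
Variable f : BimonadMor T P.
Variable adj : Adjunction (fstar f).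

Definition cross_quotient : Monad (EM T) := induced_monad adj.

Local Notation Q := cross_quotient.
Local Notation F := (ladj adj).
Local Notation U := (fstar f).

(* Its comonoidal structure (the one making it a bimonad, induced by the
   strict monoidal right adjoint fstar f):
   Q2(M,N) = U( eps_{FM ⊗ FN} ∘ F(η_M ⊗ η_N) ) : Q(M⊗N) -> QM ⊗ QN *)
Definition cq_T2 (M N : Alg T) : hom (EM T) (Q (alg_tens M N)) (alg_tens (Q M) (Q N)) :=
  fstar_str_inv f (F M) (F N)
  ∘ fm U (adj_counit adj (alg_tens (F M) (F N))
          ∘ fm F (fstar_str f (F M) (F N)
                  ∘ alg_tensm (adj_unit adj M) (adj_unit adj N))).

Definition cq_leftHopf : Prop :=
  forall M N : Alg T,
    is_iso (alg_tensm (idm (Q M)) (mu Q N) ∘ cq_T2 M (Q N)).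

Definition cq_rightHopf : Prop :=
  forall M N : Alg T,
    is_iso (alg_tensm (mu Q M) (idm (Q N)) ∘ cq_T2 (Q M) N).
End CrossQuotient.
Arguments cross_quotient {C T P f} adj.
Arguments cq_T2 {C T P f} adj M N.
Arguments cq_leftHopf {C T P f} adj.
Arguments cq_rightHopf {C T P f} adj.
Arguments leftHopf {C} T.
Arguments rightHopf {C} T.
Arguments monad_preserves_rc {C} T.

(* Main.v *)
Require Import Defs.
From Stdlib Require Import ProofIrrelevance ClassicalEpsilon.
Strategy expand [induced_monad cross_quotient].
Strategy 1000 [fstar fstar_ob].

Ltac pre p l :=
  lazymatch l with
  | @cmp ?C _ _ _ ?a ?b => let a' := pre p a in constr:(@cmp C _ _ _ a' b)
  | _ => constr:(p ∘ l)
  end.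
Ltac lrw H :=
  lazymatch type of H with
  | @eq (@hom ?C ?A ?B) ?l ?r =>
    first [ rewrite H
          | let H2 := fresh "H" in
            assert (H2 : forall (Z : ob C) (p : hom C B Z),
                ltac:(let t := pre p l in exact (t = p ∘ r)))
              by (intros; lazymatch goal with |- _ = ?pp ∘ _ => transitivity (pp ∘ l); [rewrite ?cmp_assoc; reflexivity| rewrite H; reflexivity] end);
            rewrite H2; clear H2 ]
  end; rewrite ?cmp_assoc.
Ltac lrwr H := lrw (eq_sym H).
Ltac nrm := rewrite ?cmp_assoc.

Section Coeq.
Context {C : Cat}.

Lemma coeq_epi {A B Q} {f g : hom C A B} {q : hom C B Q} (H : is_coequalizer f g q)
  {Z} (u v : hom C Q Z) : u ∘ q = v ∘ q -> u = v.
Proof.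
  intros e. destruct H as [Hq Hu].
  destruct (Hu Z (u ∘ q)) as [w [Hw Hw']].
  { rewrite <- !cmp_assoc, Hq. reflexivity. }
  transitivity w; [symmetry|]; apply Hw'; auto.
Qed.

Definition desc {A B Q} {f g : hom C A B} {q : hom C B Q} (H : is_coequalizer f g q)
  {Z} (h : hom C B Z) (e : h ∘ f = h ∘ g) : hom C Q Z :=
  proj1_sig (constructive_indefinite_description _
     (match proj2 H Z h e with ex_intro _ u (conj p _) => ex_intro _ u p end)).

Lemma desc_spec {A B Q} {f g : hom C A B} {q : hom C B Q} (H : is_coequalizer f g q)
  {Z} (h : hom C B Z) (e : h ∘ f = h ∘ g) : desc H h e ∘ q = h.
Proof. unfold desc. destruct constructive_indefinite_description; assumption. Qed.

Lemma split_coeq {A B Q} (f g : hom C A B) (q : hom C B Q) (s : hom C Q B) (t : hom C B A) :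
  q ∘ f = q ∘ g -> q ∘ s = idm Q -> f ∘ t = idm B -> g ∘ t = s ∘ q -> is_coequalizer f g q.
Proof.
  intros e1 e2 e3 e4. split; auto.
  intros Z h eh. exists (h ∘ s). split.
  - rewrite <- cmp_assoc, <- e4, cmp_assoc, <- eh, <- cmp_assoc, e3, cmp_idr. reflexivity.
  - intros u eu. rewrite <- eu, <- cmp_assoc, e2, cmp_idr. reflexivity.
Qed.

Lemma coeq_iso {A B Q Q'} {f g : hom C A B} {c : hom C B Q} {e : hom C B Q'}
  (Hc : is_coequalizer f g c) (He : is_coequalizer f g e) (x : hom C Q Q') :
  x ∘ c = e -> is_iso x.
Proof.
  intros ex. exists (desc He c (proj1 Hc)). split.
  - apply (coeq_epi Hc). rewrite <- cmp_assoc, ex, desc_spec, cmp_idl. reflexivity.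
  - apply (coeq_epi He). rewrite <- cmp_assoc, desc_spec, ex, cmp_idl. reflexivity.
Qed.

Lemma coeq_precomp_iso {A A' B B' Q} (f g : hom C A B) (f' g' : hom C A' B')
  (d : hom C B' Q) (k : hom C B B') (ki : hom C B' B) (s : hom C A' A) :
  is_coequalizer f' g' d -> ki ∘ k = idm B -> k ∘ ki = idm B' ->
  k ∘ f ∘ s = f' -> k ∘ g ∘ s = g' -> d ∘ k ∘ f = d ∘ k ∘ g ->
  is_coequalizer f g (d ∘ k).
Proof.
  intros Hd e1 e2 e3 e4 e5. split; auto.
  intros Z h eh.
  assert (eh' : (h ∘ ki) ∘ f' = (h ∘ ki) ∘ g').
  { rewrite <- e3, <- e4. nrm. lrw e1. rewrite cmp_idr, eh. reflexivity. }
  exists (desc Hd _ eh'). split.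
  - rewrite cmp_assoc, desc_spec, <- cmp_assoc, e1, cmp_idr. reflexivity.
  - intros u eu. apply (coeq_epi Hd). rewrite desc_spec, <- eu, <- !cmp_assoc, e2, cmp_idr.
    reflexivity.
Qed.

Lemma iso_mono {A B} (x : hom C A B) : is_iso x -> forall Z (u v : hom C Z A), x ∘ u = x ∘ v -> u = v.
Proof.
  intros [y [e1 e2]] Z u v e.
  rewrite <- (cmp_idl u), <- (cmp_idl v), <- e1, <- !cmp_assoc, e. reflexivity.
Qed.

End Coeq.

Lemma und_lin {C : Cat} {P : Monad C} {A B : Alg P} (h : hom (EM P) A B) :
  act B ∘ mmap P (und h) = und h ∘ act A.
Proof. exact (proj2_sig h). Qed.

Lemma und_cmp {C : Cat} {P : Monad C} {A B D : EM P} (g : hom (EM P) B D) (h : hom (EM P) A B) :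
  und (g ∘ h) = und g ∘ und h.
Proof. reflexivity. Qed.

Lemma und_idm {C : Cat} {P : Monad C} (A : EM P) : und (idm A) = idm (carrier A).
Proof. reflexivity. Qed.

Lemma iso_EM {C : Cat} {P : Monad C} {A B : EM P} (h : hom (EM P) A B) :
  is_iso (und h) -> is_iso h.
Proof.
  intros [g [e1 e2]].
  assert (pg : act A ∘ mmap P g = g ∘ act B).
  { apply (iso_mono (und h) (ex_intro _ g (conj e1 e2))).
    nrm. rewrite <- und_lin. rewrite <- cmp_assoc, <- mmap_cmp, e2, mmap_id, cmp_idr.
    rewrite cmp_idl. reflexivity. }
  exists (exist _ g pg). split; apply sig_ext; simpl; assumption.
Qed.

Section Lift.
Context {C : Cat} (P : Monad C) (HP : monad_preserves_rc P).

Lemma refl_mmap {A B} (f g : hom C A B) : reflexive_pair f g -> reflexive_pair (mmap P f) (mmap P g).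
Proof. intros [s [e1 e2]]. exists (mmap P s). rewrite <- !mmap_cmp, e1, e2, mmap_id. auto. Qed.

Variables (A B : Alg P) (g h : hom (EM P) A B) (Hr : reflexive_pair (und g) (und h))
  (Q0 : C) (q : hom C (carrier B) Q0) (Hq : is_coequalizer (und g) (und h) q).

Definition HPq := HP _ _ _ _ _ _ Hr Hq.
Definition HPPq := HP _ _ _ _ _ _ (refl_mmap _ _ Hr) HPq.

Lemma lift_e : (q ∘ act B) ∘ mmap P (und g) = (q ∘ act B) ∘ mmap P (und h).
Proof. rewrite <- !cmp_assoc, !und_lin, !cmp_assoc, (proj1 Hq). reflexivity. Qed.

Definition lift_act := desc HPq (q ∘ act B) lift_e.
Lemma lift_act_spec : lift_act ∘ mmap P q = q ∘ act B.
Proof. apply desc_spec. Qed.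

Lemma lift_act_eta : lift_act ∘ eta P Q0 = idm Q0.
Proof.
  apply (coeq_epi Hq). rewrite <- cmp_assoc, <- eta_nat, cmp_assoc, lift_act_spec,
    <- cmp_assoc, act_eta, cmp_idr, cmp_idl. reflexivity.
Qed.

Lemma lift_act_mu : lift_act ∘ mmap P lift_act = lift_act ∘ mu P Q0.
Proof.
  apply (coeq_epi HPPq).
  rewrite <- cmp_assoc, <- mmap_cmp, lift_act_spec, mmap_cmp, cmp_assoc, lift_act_spec,
    <- cmp_assoc, act_mu.
  rewrite <- (cmp_assoc _ (mu P Q0)), <- mu_nat. nrm. rewrite lift_act_spec. reflexivity.
Qed.

Definition lift_ob : Alg P := Build_Alg C P Q0 lift_act lift_act_eta lift_act_mu.
Definition lift_q : hom (EM P) B lift_ob := exist _ q lift_act_spec.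

Definition lift_desc {Z : Alg P} (k : hom (EM P) B Z) (ek : und k ∘ und g = und k ∘ und h)
  : hom (EM P) lift_ob Z.
Proof.
  exists (desc Hq (und k) ek). simpl.
  apply (coeq_epi HPq).
  rewrite <- cmp_assoc, <- mmap_cmp, desc_spec, und_lin.
  rewrite <- cmp_assoc, lift_act_spec, cmp_assoc, desc_spec. reflexivity.
Defined.

Lemma lift_desc_spec {Z : Alg P} (k : hom (EM P) B Z) (ek : und k ∘ und g = und k ∘ und h) :
  und (lift_desc k ek) ∘ q = und k.
Proof. apply desc_spec. Qed.
End Lift.

Definition free_alg {C : Cat} (P : Monad C) (X : C) : Alg P :=
  Build_Alg C P (P X) (mu P X) (mu_eta_l _ P X) (mu_assoc _ P X).

Definition free_map {C : Cat} (P : Monad C) {X Y : C} (k : hom C X Y) :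
  hom (EM P) (free_alg P X) (free_alg P Y) := exist _ (mmap P k) (eq_sym (mu_nat _ P _ _ k)).

Definition free_ext {C : Cat} (P : Monad C) {X : C} {A : Alg P} (k : hom C X (carrier A)) :
  hom (EM P) (free_alg P X) A.
Proof.
  exists (act A ∘ mmap P k). simpl.
  rewrite mmap_cmp, cmp_assoc, act_mu, <- cmp_assoc, <- mu_nat, cmp_assoc. reflexivity.
Defined.

Lemma free_repr {C : Cat} (P : Monad C) {X : C} {A : Alg P} (x : hom (EM P) (free_alg P X) A) :
  und x = act A ∘ mmap P (und x ∘ eta P X).
Proof.
  rewrite mmap_cmp, cmp_assoc, und_lin. simpl. rewrite <- cmp_assoc, mu_eta_r, cmp_idr. reflexivity.
Qed.

Lemma free_uniq {C : Cat} (P : Monad C) {X : C} {A : Alg P} (x y : hom (EM P) (free_alg P X) A) :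
  und x ∘ eta P X = und y ∘ eta P X -> x = y.
Proof. intros e. apply sig_ext. change (und x = und y). rewrite (free_repr P x), (free_repr P y), e. reflexivity. Qed.

Section AdjBuild.
Context {D E : Cat} (U : Functor D E) (F0 : E -> D) (un : forall X, hom E X (U (F0 X)))
  (ext : forall X A, hom E X (U A) -> hom D (F0 X) A)
  (ext_spec : forall X A k, fm U (ext X A k) ∘ un X = k)
  (ext_uniq : forall X A k (g : hom D (F0 X) A), fm U g ∘ un X = k -> g = ext X A k).

Lemma ext_eq X A (g g' : hom D (F0 X) A) : fm U g ∘ un X = fm U g' ∘ un X -> g = g'.
Proof. intros e. transitivity (ext X A (fm U g' ∘ un X)); [|symmetry]; apply ext_uniq; auto. Qed.

Definition Fbuild : Functor E D.
Proof.
  refine {| fo := F0; fm := fun X Y h => ext X (F0 Y) (un Y ∘ h) |}.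
  - intros A. symmetry; apply ext_uniq. rewrite fm_id, cmp_idl, cmp_idr. reflexivity.
  - intros A B E' f g. symmetry; apply ext_uniq.
    rewrite fm_cmp, <- cmp_assoc, ext_spec, cmp_assoc, ext_spec, <- cmp_assoc. reflexivity.
Defined.

Definition adj_build : Adjunction U.
Proof.
  refine {| ladj := Fbuild; adj_unit := un; adj_counit := fun A => ext (U A) A (idm (U A)) |}.
  - intros X Y h. simpl. apply ext_spec.
  - intros A B h. simpl. apply ext_eq.
    rewrite !fm_cmp, <- !cmp_assoc, !ext_spec, cmp_assoc, ext_spec, cmp_idr, cmp_idl. reflexivity.
  - intros X. simpl. apply ext_eq.
    rewrite fm_cmp, <- cmp_assoc, ext_spec, cmp_assoc, ext_spec, fm_id. reflexivity.
  - intros A. apply ext_spec.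
Defined.
End AdjBuild.

Lemma fstar_lin {C : SMCat} {T P : Bimonad C} (f : BimonadMor T P) {M : Alg T} {A : Alg P}
  (k : hom (EM T) M (fstar f A)) :
  act A ∘ f (carrier A) ∘ mmap T (und k) = und k ∘ act M.
Proof. exact (proj2_sig k). Qed.

Section Exist.
Context {C : SMCat} {T P : Bimonad C} (f : BimonadMor T P)
  (HRC : has_reflexive_coequalizers C) (HP : monad_preserves_rc P).

Definition alphaM (M : Alg T) : hom (EM P) (free_alg P (T (carrier M))) (free_alg P (carrier M)) :=
  free_map P (act M).
Definition betaM (M : Alg T) : hom (EM P) (free_alg P (T (carrier M))) (free_alg P (carrier M)) :=
  free_ext P (A := free_alg P (carrier M)) (f (carrier M)).

Lemma reflM (M : Alg T) : reflexive_pair (und (alphaM M)) (und (betaM M)).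
Proof.
  exists (mmap P (eta T (carrier M))). simpl. split.
  - rewrite <- mmap_cmp, act_eta, mmap_id. reflexivity.
  - rewrite <- cmp_assoc, <- mmap_cmp, bmor_eta, mu_eta_r. reflexivity.
Qed.

Definition cdata (M : Alg T) :=
  constructive_indefinite_description _ (HRC _ _ _ _ (reflM M)).
Definition cQ (M : Alg T) : C := proj1_sig (cdata M).
Definition cq (M : Alg T) : hom C (P (carrier M)) (cQ M) :=
  proj1_sig (constructive_indefinite_description _ (proj2_sig (cdata M))).
Lemma cHq (M : Alg T) : is_coequalizer (und (alphaM M)) (und (betaM M)) (cq M).
Proof. exact (proj2_sig (constructive_indefinite_description _ (proj2_sig (cdata M)))). Qed.

Definition F0 (M : Alg T) : Alg P := lift_ob P HP _ _ _ _ (reflM M) _ _ (cHq M).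

Definition un0 (M : Alg T) : hom (EM T) M (fstar f (F0 M)).
Proof.
  exists (cq M ∘ eta P (carrier M)). simpl.
  rewrite <- cmp_assoc, <- bmor_nat, mmap_cmp. nrm.
  pose proof (lift_act_spec P HP _ _ _ _ (reflM M) _ _ (cHq M)) as L; simpl in L.
  rewrite L.
  lrw (mu_eta_r _ P (carrier M)). rewrite cmp_idr.
  lrwr (eta_nat _ P _ _ (act M)).
  pose proof (proj1 (cHq M)) as E; simpl in E. lrw E.
  lrw (eta_nat _ P _ _ (f (carrier M))). lrw (mu_eta_l _ P (carrier M)). rewrite cmp_idr.
  reflexivity.
Defined.

Lemma ext0_e (M : Alg T) (A : Alg P) (k : hom (EM T) M (fstar f A)) :
  und (free_ext P (A := A) (und k)) ∘ und (alphaM M) = und (free_ext P (A := A) (und k)) ∘ und (betaM M).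
Proof.
  change (act A ∘ mmap P (und k) ∘ mmap P (act M) = act A ∘ mmap P (und k) ∘ (mu P (carrier M) ∘ mmap P (f (carrier M)))).
  rewrite <- cmp_assoc, <- mmap_cmp, <- fstar_lin, !mmap_cmp. nrm. rewrite act_mu.
  lrw (mu_nat _ P _ _ (und k)). lrwr (mmap_cmp _ P _ _ _ (f (carrier M)) (mmap P (und k))).
  rewrite bmor_nat, mmap_cmp. nrm. reflexivity.
Qed.

Definition ext0 (M : Alg T) (A : Alg P) (k : hom (EM T) M (fstar f A)) : hom (EM P) (F0 M) A :=
  lift_desc P HP _ _ _ _ (reflM M) _ _ (cHq M) (free_ext P (A := A) (und k)) (ext0_e M A k).

Lemma ext0_spec M A k : fm (fstar f) (ext0 M A k) ∘ un0 M = k.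
Proof.
  apply sig_ext. change (und (ext0 M A k) ∘ (cq M ∘ eta P (carrier M)) = und k).
  pose proof (lift_desc_spec P HP _ _ _ _ (reflM M) _ _ (cHq M) (free_ext P (A:=A) (und k)) (ext0_e M A k)) as L.
  change (und (ext0 M A k) ∘ cq M = act A ∘ mmap P (und k)) in L.
  rewrite cmp_assoc, L, <- cmp_assoc, eta_nat, cmp_assoc.
  change (carrier (fstar f A)) with (carrier A). rewrite act_eta, cmp_idl. reflexivity.
Qed.

Lemma ext0_uniq M A k (g : hom (EM P) (F0 M) A) : fm (fstar f) g ∘ un0 M = k -> g = ext0 M A k.
Proof.
  intros e. apply sig_ext. apply (coeq_epi (cHq M)).
  pose proof (lift_desc_spec P HP _ _ _ _ (reflM M) _ _ (cHq M) (free_ext P (A:=A) (und k)) (ext0_e M A k)) as L.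
  change (und (ext0 M A k) ∘ cq M = und (free_ext P (A:=A) (und k))) in L.
  change (und g ∘ cq M = und (ext0 M A k) ∘ cq M). rewrite L.
  change (und (g ∘ lift_q P HP _ _ _ _ (reflM M) _ _ (cHq M)) = und (free_ext P (A := A) (und k))).
  f_equal. apply free_uniq.
  change ((und g ∘ cq M) ∘ eta P (carrier M) = act A ∘ mmap P (und k) ∘ eta P (carrier M)).
  rewrite <- cmp_assoc.
  change (und (fm (fstar f) g ∘ un0 M) = act A ∘ mmap P (und k) ∘ eta P (carrier M)).
  rewrite e, <- cmp_assoc, eta_nat, cmp_assoc. change (carrier (fstar f A)) with (carrier A).
  rewrite act_eta, cmp_idl. reflexivity.
Qed.

Definition the_adj : Adjunction (fstar f) :=
  adj_build (fstar f) F0 un0 ext0 ext0_spec ext0_uniq.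
End Exist.

Lemma mono_retr {C : Cat} {A B} (phi : hom C A B) (psi : hom C B A) :
  psi ∘ phi = idm A -> forall Z (u v : hom C Z A), phi ∘ u = phi ∘ v -> u = v.
Proof. intros e Z u v e'. rewrite <- (cmp_idl u), <- (cmp_idl v), <- e, <- !cmp_assoc, e'. reflexivity. Qed.

Lemma epi_sect {C : Cat} {A B} (phi : hom C A B) (s : hom C B A) :
  phi ∘ s = idm B -> forall Z (u v : hom C B Z), u ∘ phi = v ∘ phi -> u = v.
Proof. intros e Z u v e'. rewrite <- (cmp_idr u), <- (cmp_idr v), <- e, !cmp_assoc, e'. reflexivity. Qed.

Section AdjFacts.
Context {C : SMCat} {T P : Bimonad C} (f : BimonadMor T P) (adj : Adjunction (fstar f)).
Local Notation U := (fstar f).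
Local Notation F := (ladj adj).

Definition ueta (X : EM T) : hom C (carrier X) (carrier (F X)) := und (adj_unit adj X).
Definition ueps (A : EM P) : hom C (carrier (F (U A))) (carrier A) := und (adj_counit adj A).
Definition uF {X Y : EM T} (h : hom (EM T) X Y) : hom C (carrier (F X)) (carrier (F Y)) :=
  und (fm F h).

Lemma unit_natC X Y (h : hom (EM T) X Y) : uF h ∘ ueta X = ueta Y ∘ und h.
Proof. exact (f_equal (@und _ _ _ _) (adj_unit_nat _ _ _ adj X Y h)). Qed.
Lemma counit_natC (A B : EM P) (h : hom (EM P) A B) : und h ∘ ueps A = ueps B ∘ uF (fm U h).
Proof. exact (f_equal (@und _ _ _ _) (adj_counit_nat _ _ _ adj A B h)). Qed.
Lemma tri_rC (A : EM P) : ueps A ∘ ueta (U A) = idm (carrier A).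
Proof. exact (f_equal (@und _ _ _ _) (adj_tri_r _ _ _ adj A)). Qed.
Lemma tri_lC (X : EM T) : ueps (F X) ∘ uF (adj_unit adj X) = idm (carrier (F X)).
Proof. exact (f_equal (@und _ _ _ _) (adj_tri_l _ _ _ adj X)). Qed.
Lemma eps_linC (A : EM P) : act A ∘ mmap P (ueps A) = ueps A ∘ act (F (U A)).
Proof. exact (und_lin (adj_counit adj A)). Qed.
Lemma uF_lin {X Y : EM T} (h : hom (EM T) X Y) : act (F Y) ∘ mmap P (uF h) = uF h ∘ act (F X).
Proof. exact (und_lin (fm F h)). Qed.
Lemma uF_cmp {X Y Z : EM T} (g : hom (EM T) Y Z) (h : hom (EM T) X Y) : uF (g ∘ h) = uF g ∘ uF h.
Proof. exact (f_equal (@und _ _ _ _) (fm_cmp _ _ F _ _ _ h g)). Qed.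
Lemma uF_id (X : EM T) : uF (idm X) = idm (carrier (F X)).
Proof. exact (f_equal (@und _ _ _ _) (fm_id _ _ F X)). Qed.
Lemma ueta_lin (X : EM T) : act (F X) ∘ f (carrier (F X)) ∘ mmap T (ueta X) = ueta X ∘ act X.
Proof. exact (und_lin (adj_unit adj X)). Qed.

Lemma act_repr (A : EM P) : ueps A ∘ act (F (U A)) ∘ mmap P (ueta (U A)) = act A.
Proof.
  rewrite <- eps_linC, <- cmp_assoc, <- mmap_cmp.
  change (carrier (F (U A))) with (carrier (F (U A))).
  rewrite tri_rC, mmap_id, cmp_idr. reflexivity.
Qed.

Lemma transp (X : EM T) (B : EM P) (x : hom (EM P) (F X) B) :
  und x = ueps B ∘ uF (fm U x ∘ adj_unit adj X).
Proof.
  rewrite uF_cmp. rewrite cmp_assoc, <- counit_natC, <- cmp_assoc, tri_lC, cmp_idr. reflexivity.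
Qed.
End AdjFacts.

Section Monadic.
Context {C : SMCat} {T P : Bimonad C} (f : BimonadMor T P)
  (HRC : has_reflexive_coequalizers C) (HP : monad_preserves_rc P)
  (adj : Adjunction (fstar f)).
Local Notation U := (fstar f).
Local Notation F := (ladj adj).
Local Notation Q := (induced_monad adj).

Definition xi (Y : EM Q) : hom C (carrier (F (carrier Y))) (carrier (carrier Y)) := und (act Y).

Lemma xi_eta (Y : EM Q) : xi Y ∘ ueta f adj (carrier Y) = idm _.
Proof. pose proof (f_equal (@und _ T _ _) (act_eta _ _ Y)) as E. exact E. Qed.
Lemma xi_mu (Y : EM Q) : xi Y ∘ uF f adj (act Y) = xi Y ∘ ueps f adj (F (carrier Y)).
Proof. pose proof (f_equal (@und _ T _ _) (act_mu _ _ Y)) as E. exact E. Qed.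
Lemma xi_lin (Y : EM Q) :
  act (carrier Y) ∘ mmap T (xi Y) = xi Y ∘ (act (F (carrier Y)) ∘ f (carrier (F (carrier Y)))).
Proof. pose proof (und_lin (act Y)) as E. exact E. Qed.
Lemma xi_hom (Y Y' : EM Q) (g : hom (EM Q) Y Y') :
  xi Y' ∘ uF f adj (und g) = und (und g) ∘ xi Y.
Proof. pose proof (f_equal (@und _ T _ _) (und_lin g)) as E. exact E. Qed.

Definition pY (Y : EM Q) : hom C (P (carrier (carrier Y))) (carrier (carrier Y)) :=
  xi Y ∘ act (F (carrier Y)) ∘ mmap P (ueta f adj (carrier Y)).

Lemma EX (Y : EM Q) : exists (B : Alg P) (qh : hom (EM P) (F (carrier Y)) B)
  (phi : hom C (carrier (carrier Y)) (carrier B)) (psi : hom C (carrier B) (carrier (carrier Y))),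
  psi ∘ phi = idm _ /\ phi ∘ xi Y = und qh.
Proof.
  assert (Hr : reflexive_pair (und (adj_counit adj (F (carrier Y)))) (und (fm F (act Y)))).
  { exists (uF f adj (adj_unit adj (carrier Y))). split.
    - apply tri_lC.
    - change (uF f adj (act Y) ∘ uF f adj (adj_unit adj (carrier Y)) = idm _).
      rewrite <- uF_cmp. transitivity (uF f adj (idm (carrier Y))).
      { f_equal. exact (act_eta _ _ Y). }
      apply uF_id. }
  assert (Hx : is_coequalizer (ueps f adj (F (carrier Y))) (uF f adj (act Y)) (xi Y)).
  { apply (split_coeq _ _ _ (ueta f adj (carrier Y)) (ueta f adj (U (F (carrier Y))))).
    - symmetry; apply xi_mu.
    - apply xi_eta.
    - apply tri_rC.
    - exact (unit_natC f adj (U (F (carrier Y))) (carrier Y) (act Y)). }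
  destruct (HRC _ _ _ _ Hr) as [Q0 [q Hq]].
  exists (lift_ob P HP _ _ _ _ Hr _ _ Hq), (lift_q P HP _ _ _ _ Hr _ _ Hq),
    (desc Hx q (proj1 Hq)), (desc Hq (xi Y) (proj1 Hx)).
  split.
  - apply (coeq_epi Hx). rewrite <- cmp_assoc, desc_spec, cmp_idl. apply desc_spec.
  - apply desc_spec.
Qed.

Section K.
Variables (Y : EM Q) (B : Alg P) (qh : hom (EM P) (F (carrier Y)) B)
  (phi : hom C (carrier (carrier Y)) (carrier B)) (psi : hom C (carrier B) (carrier (carrier Y)))
  (e1 : psi ∘ phi = idm _) (e2 : phi ∘ xi Y = und qh).

Lemma K1 : phi ∘ pY Y = act B ∘ mmap P phi.
Proof.
  unfold pY. nrm. rewrite e2, <- und_lin, <- cmp_assoc, <- mmap_cmp, <- e2, <- cmp_assoc, xi_eta,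
    cmp_idr. reflexivity.
Qed.

Lemma pY_eta : pY Y ∘ eta P _ = idm _.
Proof.
  apply (mono_retr phi psi e1). rewrite cmp_assoc, K1, <- cmp_assoc, eta_nat, cmp_assoc,
    act_eta, cmp_idl, cmp_idr. reflexivity.
Qed.

Lemma pY_mu : pY Y ∘ mmap P (pY Y) = pY Y ∘ mu P _.
Proof.
  apply (mono_retr phi psi e1). rewrite !cmp_assoc, K1, <- cmp_assoc, <- mmap_cmp, K1.
  rewrite mmap_cmp, cmp_assoc, act_mu, <- !cmp_assoc, <- mu_nat. reflexivity.
Qed.

Lemma K2 : pY Y ∘ f _ = act (carrier Y).
Proof.
  apply (mono_retr phi psi e1).
  apply (epi_sect (mmap T (xi Y)) (mmap T (ueta f adj (carrier Y)))).
  { rewrite <- mmap_cmp, xi_eta, mmap_id. reflexivity. }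
  nrm. rewrite K1. lrw (bmor_nat _ _ _ f _ _ phi). lrwr (mmap_cmp _ T _ _ _ (xi Y) phi).
  rewrite e2. lrwr (bmor_nat _ _ _ f _ _ (und qh)). lrw (und_lin qh).
  rewrite <- e2. lrw (xi_lin Y). reflexivity.
Qed.
End K.

Lemma pY_eta' Y : pY Y ∘ eta P _ = idm _.
Proof. destruct (EX Y) as (B & qh & phi & psi & e1 & e2). exact (pY_eta Y B qh phi psi e1 e2). Qed.
Lemma pY_mu' Y : pY Y ∘ mmap P (pY Y) = pY Y ∘ mu P _.
Proof. destruct (EX Y) as (B & qh & phi & psi & e1 & e2). exact (pY_mu Y B qh phi psi e1 e2). Qed.
Lemma K2' Y : pY Y ∘ f _ = act (carrier Y).
Proof. destruct (EX Y) as (B & qh & phi & psi & e1 & e2). exact (K2 Y B qh phi psi e1 e2). Qed.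

Definition GY (Y : EM Q) : Alg P := Build_Alg C P (carrier (carrier Y)) (pY Y) (pY_eta' Y) (pY_mu' Y).

Definition Ghom (Y Y' : EM Q) (g : hom (EM Q) Y Y') : hom (EM P) (GY Y) (GY Y').
Proof.
  exists (und (und g)). change (pY Y' ∘ mmap P (und (und g)) = und (und g) ∘ pY Y).
  unfold pY. rewrite <- cmp_assoc, <- mmap_cmp.
  change (und (und g)) with (und (und g)) at 1.
  rewrite <- unit_natC, mmap_cmp. nrm. lrw (uF_lin f adj (und g)).
  rewrite xi_hom. nrm. reflexivity.
Defined.

Definition Gfun : Functor (EM Q) (EM P).
Proof.
  refine (Build_Functor (EM Q) (EM P) GY Ghom _ _).
  - intros A; apply sig_ext; reflexivity.
  - intros A B E g h; apply sig_ext; reflexivity.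
Defined.

Lemma K3 (Y : EM Q) (B : Alg P) (qh : hom (EM P) (F (carrier Y)) B)
  (phi : hom C (carrier (carrier Y)) (carrier B)) (psi : hom C (carrier B) (carrier (carrier Y)))
  (e1 : psi ∘ phi = idm _) (e2 : phi ∘ xi Y = und qh)
  (h : hom (EM T) (U (GY Y)) (carrier Y)) (eh : und h = idm _) :
  ueps f adj (GY Y) = xi Y ∘ uF f adj h.
Proof.
  pose (Phi := exist _ phi (eq_sym (K1 Y B qh phi e2)) : hom (EM P) (GY Y) B).
  assert (kl : act B ∘ f (carrier B) ∘ mmap T phi = phi ∘ act (carrier Y)).
  { rewrite <- (K2 Y B qh phi psi e1 e2), <- cmp_assoc, <- bmor_nat. nrm.
    rewrite (K1 Y B qh phi e2). reflexivity. }
  pose (k := exist _ phi kl : hom (EM T) (carrier Y) (U B)).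
  apply (mono_retr phi psi e1).
  change (und Phi ∘ ueps f adj (GY Y) = phi ∘ (xi Y ∘ uF f adj h)).
  rewrite counit_natC.
  assert (E1 : fm U Phi = k ∘ h).
  { apply sig_ext. change (phi = phi ∘ und h). rewrite eh, cmp_idr. reflexivity. }
  assert (E2 : fm U qh ∘ adj_unit adj (carrier Y) = k).
  { apply sig_ext. change (und qh ∘ ueta f adj (carrier Y) = phi).
    rewrite <- e2, <- cmp_assoc, xi_eta, cmp_idr. reflexivity. }
  rewrite E1, uF_cmp. nrm. rewrite <- E2, <- transp, <- e2. reflexivity.
Qed.

Definition hY (Y : EM Q) : hom (EM T) (U (GY Y)) (carrier Y).
Proof.
  exists (idm (carrier (carrier Y))).
  change (act (carrier Y) ∘ mmap T (idm _) = idm _ ∘ (pY Y ∘ f _)).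
  rewrite mmap_id, cmp_idr, cmp_idl, K2'. reflexivity.
Defined.
Definition hY' (Y : EM Q) : hom (EM T) (carrier Y) (U (GY Y)).
Proof.
  exists (idm (carrier (carrier Y))).
  change ((pY Y ∘ f _) ∘ mmap T (idm _) = idm _ ∘ act (carrier Y)).
  rewrite mmap_id, cmp_idr, cmp_idl, K2'. reflexivity.
Defined.

Lemma K3' (Y : EM Q) : ueps f adj (GY Y) = xi Y ∘ uF f adj (hY Y).
Proof. destruct (EX Y) as (B & qh & phi & psi & e1 & e2). exact (K3 Y B qh phi psi e1 e2 (hY Y) eq_refl). Qed.

Lemma hYY' (Y : EM Q) : hY Y ∘ hY' Y = idm (carrier Y).
Proof. apply sig_ext. exact (cmp_idl _). Qed.

Definition aY (Y : EM Q) : hom (EM Q) (comparison adj (GY Y)) Y.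
Proof.
  exists (hY Y). apply sig_ext.
  change (xi Y ∘ uF f adj (hY Y) = idm _ ∘ ueps f adj (GY Y)).
  rewrite cmp_idl, K3'. reflexivity.
Defined.

Definition bY (Y : EM Q) : hom (EM Q) Y (comparison adj (GY Y)).
Proof.
  exists (hY' Y). apply sig_ext.
  change (ueps f adj (GY Y) ∘ uF f adj (hY' Y) = idm _ ∘ xi Y).
  rewrite K3', <- cmp_assoc, <- uF_cmp, hYY', uF_id, cmp_idr, cmp_idl. reflexivity.
Defined.

Definition cA (A : EM P) : hom (EM P) (Gfun (comparison adj A)) A.
Proof.
  exists (idm (carrier A)).
  change (act A ∘ mmap P (idm _) = idm _ ∘ (ueps f adj A ∘ act (F (U A)) ∘ mmap P (ueta f adj (U A)))).
  rewrite act_repr, mmap_id, cmp_idr, cmp_idl. reflexivity.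
Defined.

Definition dA (A : EM P) : hom (EM P) A (Gfun (comparison adj A)).
Proof.
  exists (idm (carrier A)).
  change ((ueps f adj A ∘ act (F (U A)) ∘ mmap P (ueta f adj (U A))) ∘ mmap P (idm _) = idm _ ∘ act A).
  rewrite act_repr, mmap_id, cmp_idr, cmp_idl. reflexivity.
Defined.

Lemma comparison_equiv : IsEquivalence (comparison adj).
Proof.
  exists Gfun. split.
  - exists cA. split.
    + intros A. exists (dA A). split; apply sig_ext; exact (cmp_idl _).
    + intros A B h. apply sig_ext. exact (eq_trans (cmp_idr _) (eq_sym (cmp_idl _))).
  - exists aY. split.
    + intros Y. exists (bY Y). split; apply sig_ext; apply sig_ext; exact (cmp_idl _).
    + intros Y Y' g. apply sig_ext; apply sig_ext. exact (eq_trans (cmp_idr _) (eq_sym (cmp_idl _))).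
Qed.
End Monadic.

Lemma monadic_fstar {C : SMCat} {T P : Bimonad C} (f : BimonadMor T P)
  (HRC : has_reflexive_coequalizers C) (HP : monad_preserves_rc P) : cross_quotientable f.
Proof.
  split.
  - constructor. exact (the_adj f HRC HP).
  - intros adj. exact (comparison_equiv f HRC HP adj).
Qed.

Lemma interchange_p {C : SMCat} {A B E A' B' E' Z : C} (p : hom C (E ⊗ E') Z)
  (f : hom C A B) (g : hom C B E) (f' : hom C A' B') (g' : hom C B' E') :
  p ∘ (g ⊗m g') ∘ (f ⊗m f') = p ∘ ((g ∘ f) ⊗m (g' ∘ f')).
Proof. rewrite <- cmp_assoc, interchange. reflexivity. Qed.

Lemma tens_split_r {C : SMCat} {A B D D' E : C} (x : hom C A B) (a : hom C D E) (b : hom C D' D) :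
  x ⊗m (a ∘ b) = (x ⊗m a) ∘ (idm A ⊗m b).
Proof. rewrite interchange, cmp_idr. reflexivity. Qed.
Lemma tens_split_l {C : SMCat} {A B D D' E : C} (x : hom C A B) (a : hom C D E) (b : hom C D' D) :
  (a ∘ b) ⊗m x = (a ⊗m x) ∘ (b ⊗m idm A).
Proof. rewrite interchange, cmp_idr. reflexivity. Qed.

Ltac tmerge := repeat first [rewrite interchange_p | rewrite interchange].

Section HopfL.
Context {C : SMCat} (B : Bimonad C) (HB : leftHopf B).

Definition Hl (X Y : C) : hom C (B (X ⊗ B Y)) (B X ⊗ B Y) :=
  (idm (B X) ⊗m mu B Y) ∘ T2 B X (B Y).

Lemma Hl_def (X Y : C) : (idm (B X) ⊗m mu B Y) ∘ T2 B X (B Y) = Hl X Y.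
Proof. reflexivity. Qed.

Lemma Hl_nat (X Y Y' : C) (g : hom C Y Y') :
  Hl X Y' ∘ mmap B (idm X ⊗m mmap B g) = (idm (B X) ⊗m mmap B g) ∘ Hl X Y.
Proof.
  unfold Hl. rewrite <- cmp_assoc, T2_nat, mmap_id. nrm. tmerge.
  rewrite mu_nat, !cmp_idl. reflexivity.
Qed.

Lemma Hl_mu (X Y : C) :
  Hl X Y ∘ mmap B (idm X ⊗m mu B Y) = (idm (B X) ⊗m mu B Y) ∘ Hl X (B Y).
Proof.
  unfold Hl. rewrite <- cmp_assoc, T2_nat, mmap_id. nrm. tmerge.
  rewrite mu_assoc, !cmp_idl. reflexivity.
Qed.

Lemma Hl_eta (X Y : C) : Hl X Y ∘ mmap B (idm X ⊗m eta B Y) = T2 B X Y.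
Proof.
  unfold Hl. rewrite <- cmp_assoc, T2_nat, mmap_id. nrm. tmerge.
  rewrite mu_eta_r, cmp_idl, tensm_id, cmp_idl. reflexivity.
Qed.

Lemma iso_inv_nat {A1 A2 B1 B2 : C} (h1 : hom C A1 B1) (h2 : hom C A2 B2) (i1 : hom C B1 A1) (i2 : hom C B2 A2)
  (u : hom C A1 A2) (v : hom C B1 B2) :
  i1 ∘ h1 = idm _ -> h1 ∘ i1 = idm _ -> i2 ∘ h2 = idm _ -> h2 ∘ i2 = idm _ ->
  h2 ∘ u = v ∘ h1 -> i2 ∘ v = u ∘ i1.
Proof.
  intros a1 b1 a2 b2 e.
  rewrite <- (cmp_idr (i2 ∘ v)), <- b1. nrm. lrwr e. rewrite a2, cmp_idl. reflexivity.
Qed.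

Lemma kappa_l_iso (X A0 : C) (a : hom C (B A0) A0)
  (ae : a ∘ eta B A0 = idm A0) (am : a ∘ mmap B a = a ∘ mu B A0) :
  is_iso ((idm (B X) ⊗m a) ∘ T2 B X A0).
Proof.
  destruct (HB X A0) as [Hi [h1 h2]]. fold (Hl X A0) in h1, h2.
  destruct (HB X (B A0)) as [Hi' [h1' h2']]. fold (Hl X (B A0)) in h1', h2'.
  exists (mmap B (idm X ⊗m a) ∘ Hi ∘ (idm (B X) ⊗m eta B A0)). split.
  -
    assert (E1 : (idm (B X) ⊗m eta B A0) ∘ (idm (B X) ⊗m a)
                 = (idm (B X) ⊗m mmap B a) ∘ (idm (B X) ⊗m eta B (B A0))).
    { rewrite !interchange, eta_nat. reflexivity. }
    assert (E2 : Hi ∘ (idm (B X) ⊗m mmap B a) = mmap B (idm X ⊗m mmap B a) ∘ Hi').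
    { apply (iso_inv_nat (Hl X (B A0)) (Hl X A0)); auto. apply Hl_nat. }
    assert (E3 : mmap B (idm X ⊗m mu B A0) ∘ Hi' = Hi ∘ (idm (B X) ⊗m mu B A0)).
    { symmetry. apply (iso_inv_nat (Hl X (B A0)) (Hl X A0)); auto. apply Hl_mu. }
    assert (E4 : Hi ∘ T2 B X A0 = mmap B (idm X ⊗m eta B A0)).
    { rewrite <- Hl_eta, cmp_assoc, h1, cmp_idl. reflexivity. }
    nrm. lrw E1. lrw E2. lrwr (mmap_cmp _ B _ _ _ (idm X ⊗m mmap B a) (idm X ⊗m a)).
    rewrite interchange, am, <- (cmp_idl (idm X)), <- interchange, mmap_cmp, !cmp_idl. nrm.
    lrw E3. tmerge. rewrite mu_eta_l, cmp_idl, tensm_id, cmp_idr. lrw E4.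
    rewrite <- mmap_cmp, interchange, ae, cmp_idl, tensm_id, mmap_id. reflexivity.
  -
    nrm. lrw (T2_nat _ B _ _ _ _ (idm X) a). rewrite mmap_id. tmerge.
    rewrite cmp_idl, am, (tens_split_r (idm (B X)) a (mu B A0)). nrm.
    lrw (Hl_def X A0). lrw h2. rewrite cmp_idr. tmerge. rewrite ae, cmp_idl, tensm_id. reflexivity.
Qed.
End HopfL.

Section HopfR.
Context {C : SMCat} (B : Bimonad C) (HB : rightHopf B).

Definition Hr (X Y : C) : hom C (B (B X ⊗ Y)) (B X ⊗ B Y) :=
  (mu B X ⊗m idm (B Y)) ∘ T2 B (B X) Y.

Lemma Hr_def (X Y : C) : (mu B X ⊗m idm (B Y)) ∘ T2 B (B X) Y = Hr X Y.
Proof. reflexivity. Qed.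

Lemma Hr_nat (X X' Y : C) (g : hom C X X') :
  Hr X' Y ∘ mmap B (mmap B g ⊗m idm Y) = (mmap B g ⊗m idm (B Y)) ∘ Hr X Y.
Proof.
  unfold Hr. rewrite <- cmp_assoc, T2_nat, mmap_id. nrm. tmerge.
  rewrite mu_nat, !cmp_idl. reflexivity.
Qed.

Lemma Hr_mu (X Y : C) :
  Hr X Y ∘ mmap B (mu B X ⊗m idm Y) = (mu B X ⊗m idm (B Y)) ∘ Hr (B X) Y.
Proof.
  unfold Hr. rewrite <- cmp_assoc, T2_nat, mmap_id. nrm. tmerge.
  rewrite mu_assoc, !cmp_idl. reflexivity.
Qed.

Lemma Hr_eta (X Y : C) : Hr X Y ∘ mmap B (eta B X ⊗m idm Y) = T2 B X Y.
Proof.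
  unfold Hr. rewrite <- cmp_assoc, T2_nat, mmap_id. nrm. tmerge.
  rewrite mu_eta_r, cmp_idl, tensm_id, cmp_idl. reflexivity.
Qed.

Lemma kappa_r_iso (X A0 : C) (a : hom C (B A0) A0)
  (ae : a ∘ eta B A0 = idm A0) (am : a ∘ mmap B a = a ∘ mu B A0) :
  is_iso ((a ⊗m idm (B X)) ∘ T2 B A0 X).
Proof.
  destruct (HB A0 X) as [Hi [h1 h2]]. fold (Hr A0 X) in h1, h2.
  destruct (HB (B A0) X) as [Hi' [h1' h2']]. fold (Hr (B A0) X) in h1', h2'.
  exists (mmap B (a ⊗m idm X) ∘ Hi ∘ (eta B A0 ⊗m idm (B X))). split.
  - assert (E1 : (eta B A0 ⊗m idm (B X)) ∘ (a ⊗m idm (B X))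
                 = (mmap B a ⊗m idm (B X)) ∘ (eta B (B A0) ⊗m idm (B X))).
    { rewrite !interchange, eta_nat. reflexivity. }
    assert (E2 : Hi ∘ (mmap B a ⊗m idm (B X)) = mmap B (mmap B a ⊗m idm X) ∘ Hi').
    { apply (iso_inv_nat (Hr (B A0) X) (Hr A0 X)); auto. apply Hr_nat. }
    assert (E3 : mmap B (mu B A0 ⊗m idm X) ∘ Hi' = Hi ∘ (mu B A0 ⊗m idm (B X))).
    { symmetry. apply (iso_inv_nat (Hr (B A0) X) (Hr A0 X)); auto. apply Hr_mu. }
    assert (E4 : Hi ∘ T2 B A0 X = mmap B (eta B A0 ⊗m idm X)).
    { rewrite <- Hr_eta, cmp_assoc, h1, cmp_idl. reflexivity. }
    nrm. lrw E1. lrw E2. lrwr (mmap_cmp _ B _ _ _ (mmap B a ⊗m idm X) (a ⊗m idm X)).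
    rewrite interchange, am, <- (cmp_idl (idm X)), <- interchange, mmap_cmp, !cmp_idl. nrm.
    lrw E3. tmerge. rewrite mu_eta_l, cmp_idl, tensm_id, cmp_idr. lrw E4.
    rewrite <- mmap_cmp, interchange, ae, cmp_idl, tensm_id, mmap_id. reflexivity.
  - nrm. lrw (T2_nat _ B _ _ _ _ a (idm X)). rewrite mmap_id. tmerge.
    rewrite cmp_idl, am, (tens_split_l (idm (B X)) a (mu B A0)). nrm.
    lrw (Hr_def A0 X). lrw h2. rewrite cmp_idr. tmerge. rewrite ae, cmp_idl, tensm_id. reflexivity.
Qed.
End HopfR.

Lemma coeq_postiso {C : Cat} {A B Q Q'} {f g : hom C A B} {q : hom C B Q} (v : hom C Q Q') :
  is_coequalizer f g q -> is_iso v -> is_coequalizer f g (v ∘ q).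
Proof.
  intros Hq [vi [e1 e2]]. split.
  - rewrite <- !cmp_assoc, (proj1 Hq). reflexivity.
  - intros Z h eh. exists (desc Hq h eh ∘ vi). split.
    + rewrite cmp_assoc. lrw e1. rewrite cmp_idr. apply desc_spec.
    + intros u eu.
      assert (E : desc Hq h eh = u ∘ v).
      { apply (coeq_epi Hq). rewrite desc_spec, <- eu. nrm. reflexivity. }
      rewrite E, <- cmp_assoc, e2, cmp_idr. reflexivity.
Qed.

Section CEQ.
Context {C : SMCat} {T P : Bimonad C} (f : BimonadMor T P)
  (HRC : has_reflexive_coequalizers C) (HP : monad_preserves_rc P)
  (adj : Adjunction (fstar f)).
Local Notation U := (fstar f).
Local Notation F := (ladj adj).

Definition cM (M : EM T) : hom C (P (carrier M)) (carrier (F M)) :=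
  act (F M) ∘ mmap P (ueta f adj M).

Lemma transp_eq (X : EM T) (A : EM P) (x y : hom (EM P) (F X) A) :
  und x ∘ ueta f adj X = und y ∘ ueta f adj X -> x = y.
Proof.
  intros e. apply sig_ext. change (und x = und y).
  rewrite (transp f adj X A x), (transp f adj X A y). f_equal. f_equal. apply sig_ext. exact e.
Qed.

Lemma CEQ (M : EM T) :
  is_coequalizer (mmap P (act M)) (mu P (carrier M) ∘ mmap P (f (carrier M))) (cM M).
Proof.
  pose (cP := free_ext P (A := F M) (ueta f adj M)).
  assert (ce : und cP ∘ und (alphaM M) = und cP ∘ und (betaM f M)).
  { change (act (F M) ∘ mmap P (ueta f adj M) ∘ mmap P (act M) =
            act (F M) ∘ mmap P (ueta f adj M) ∘ (mu P (carrier M) ∘ mmap P (f (carrier M)))).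
    rewrite <- cmp_assoc, <- mmap_cmp, <- ueta_lin, !mmap_cmp. nrm. rewrite act_mu.
    lrw (mu_nat _ P _ _ (ueta f adj M)).
    lrwr (mmap_cmp _ P _ _ _ (f (carrier M)) (mmap P (ueta f adj M))).
    rewrite bmor_nat, mmap_cmp. nrm. reflexivity. }
  pose (v := lift_desc P HP _ _ _ _ (reflM f M) _ _ (cHq f HRC M) cP ce : hom (EM P) (F0 f HRC HP M) (F M)).
  pose (w := adj_counit adj (F0 f HRC HP M) ∘ fm F (un0 f HRC HP M)).
  assert (ev : und v ∘ cq f HRC M = cM M).
  { exact (lift_desc_spec P HP _ _ _ _ (reflM f M) _ _ (cHq f HRC M) cP ce). }
  assert (ew : und w ∘ ueta f adj M = cq f HRC M ∘ eta P (carrier M)).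
  { change (ueps f adj (F0 f HRC HP M) ∘ uF f adj (un0 f HRC HP M) ∘ ueta f adj M
            = cq f HRC M ∘ eta P (carrier M)).
    rewrite <- cmp_assoc, unit_natC, cmp_assoc, tri_rC, cmp_idl. reflexivity. }
  assert (vw : v ∘ w = idm (F M)).
  { apply transp_eq. change (und v ∘ und w ∘ ueta f adj M = idm _ ∘ ueta f adj M).
    rewrite <- cmp_assoc, ew, cmp_assoc, ev. unfold cM.
    rewrite <- cmp_assoc, eta_nat, cmp_assoc, act_eta, !cmp_idl. reflexivity. }
  assert (wv : w ∘ v = @idm (EM P) (F0 f HRC HP M)).
  { apply sig_ext. apply (coeq_epi (cHq f HRC M)).
    change (und w ∘ und v ∘ cq f HRC M = idm _ ∘ cq f HRC M).
    rewrite <- cmp_assoc, ev, cmp_idl. unfold cM. rewrite cmp_assoc, <- und_lin, <- cmp_assoc,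
      <- mmap_cmp, ew, mmap_cmp. nrm.
    pose proof (lift_act_spec P HP _ _ _ _ (reflM f M) _ _ (cHq f HRC M)) as L.
    change (act (F0 f HRC HP M) ∘ mmap P (cq f HRC M) = cq f HRC M ∘ mu P (carrier M)) in L.
    rewrite L, <- cmp_assoc, mu_eta_r, cmp_idr. reflexivity. }
  assert (Hv : is_iso (und v)).
  { exists (und w). split; [exact (f_equal (@und _ P _ _) wv) | exact (f_equal (@und _ P _ _) vw)]. }
  rewrite <- ev. apply coeq_postiso; auto. exact (cHq f HRC M).
Qed.
End CEQ.

Section CoreL.
Context {C : SMCat} {T P : Bimonad C} (f : BimonadMor T P)
  (Ht : tensor_preserves_rc_left C) (HPl : leftHopf P) (HTl : leftHopf T).

Variables (M : Alg T) (A : Alg P).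
Definition kap (X : C) : hom C (P (X ⊗ carrier A)) (P X ⊗ carrier A) :=
  (idm (P X) ⊗m act A) ∘ T2 P X (carrier A).
Definition rho : hom C (T (carrier M ⊗ carrier A)) (T (carrier M) ⊗ carrier A) :=
  (idm (T (carrier M)) ⊗m (act A ∘ f (carrier A))) ∘ T2 T (carrier M) (carrier A).

Lemma kap_nat (X Y : C) (g : hom C X Y) :
  kap Y ∘ mmap P (g ⊗m idm (carrier A)) = (mmap P g ⊗m idm (carrier A)) ∘ kap X.
Proof.
  unfold kap. rewrite <- cmp_assoc, T2_nat, mmap_id. nrm. tmerge.
  rewrite !cmp_idl, !cmp_idr. reflexivity.
Qed.

Lemma kap_mu : kap (carrier M) ∘ mu P (carrier M ⊗ carrier A)
  = (mu P (carrier M) ⊗m idm (carrier A)) ∘ kap (P (carrier M)) ∘ mmap P (kap (carrier M)).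
Proof.
  unfold kap. rewrite <- cmp_assoc, mu_T2. nrm. tmerge.
  rewrite mmap_cmp. nrm. lrw (T2_nat _ P _ _ _ _ (idm (P (carrier M))) (act A)).
  rewrite !mmap_id. tmerge. rewrite <- act_mu, !cmp_idl, !cmp_idr. reflexivity.
Qed.

Lemma kap_f : kap (carrier M) ∘ f (carrier M ⊗ carrier A) = (f (carrier M) ⊗m idm (carrier A)) ∘ rho.
Proof.
  unfold kap, rho. rewrite <- cmp_assoc, bmor_T2. nrm. tmerge.
  rewrite !cmp_idl, !cmp_idr. reflexivity.
Qed.

Lemma actM' : act (alg_tens M (fstar f A)) = (act M ⊗m idm (carrier A)) ∘ rho.
Proof.
  change ((act M ⊗m (act A ∘ f (carrier A))) ∘ T2 T (carrier M) (carrier A) = (act M ⊗m idm (carrier A)) ∘ rho).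
  unfold rho. nrm. tmerge. rewrite cmp_idl, cmp_idr. reflexivity.
Qed.

Lemma core_left {Z Q1 : C} (cm : hom C (P (carrier M)) Z)
  (Hcm : is_coequalizer (mmap P (act M)) (mu P (carrier M) ∘ mmap P (f (carrier M))) cm)
  (c' : hom C (P (carrier M ⊗ carrier A)) Q1)
  (Hc' : is_coequalizer (mmap P (act (alg_tens M (fstar f A))))
           (mu P (carrier M ⊗ carrier A) ∘ mmap P (f (carrier M ⊗ carrier A))) c')
  (chi : hom C Q1 (Z ⊗ carrier A))
  (e : chi ∘ c' = (cm ⊗m idm (carrier A)) ∘ kap (carrier M)) : is_iso chi.
Proof.
  destruct (kappa_l_iso P HPl (carrier M) (carrier A) (act A) (act_eta _ _ A) (act_mu _ _ A))
    as [ki [k1 k2]]. fold (kap (carrier M)) in k1, k2.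
  destruct (kappa_l_iso P HPl (T (carrier M)) (carrier A) (act A) (act_eta _ _ A) (act_mu _ _ A))
    as [ki' [k1' k2']]. fold (kap (T (carrier M))) in k1', k2'.
  destruct (kappa_l_iso T HTl (carrier M) (carrier A) (act A ∘ f (carrier A))
    (act_eta _ _ (fstar f A)) (act_mu _ _ (fstar f A))) as [ri [r1 r2]]. fold rho in r1, r2.
  pose proof (Ht _ _ _ _ _ cm (carrier A) (reflM f M) Hcm) as Hd.
  assert (Ea : kap (carrier M) ∘ mmap P (act (alg_tens M (fstar f A))) ∘ (mmap P ri ∘ ki')
              = mmap P (act M) ⊗m idm (carrier A)).
  { rewrite actM', mmap_cmp. nrm. lrw (kap_nat _ _ (act M)).
    lrwr (mmap_cmp _ P _ _ _ ri rho). rewrite r2, mmap_id, cmp_idr. lrw k2'. rewrite cmp_idr. reflexivity. }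
  assert (Eb : kap (carrier M) ∘ (mu P (carrier M ⊗ carrier A) ∘ mmap P (f (carrier M ⊗ carrier A)))
                 ∘ (mmap P ri ∘ ki')
              = (mu P (carrier M) ∘ mmap P (f (carrier M))) ⊗m idm (carrier A)).
  { nrm. rewrite kap_mu. lrwr (mmap_cmp _ P _ _ _ (f (carrier M ⊗ carrier A)) (kap (carrier M))).
    rewrite kap_f, mmap_cmp. nrm. lrw (kap_nat _ _ (f (carrier M))).
    lrwr (mmap_cmp _ P _ _ _ ri rho). rewrite r2, mmap_id, cmp_idr. lrw k2'. rewrite cmp_idr.
    tmerge. rewrite cmp_idl. reflexivity. }
  assert (Ec : cm ⊗m idm (carrier A) ∘ kap (carrier M) ∘ mmap P (act (alg_tens M (fstar f A)))
             = cm ⊗m idm (carrier A) ∘ kap (carrier M) ∘ (mu P (carrier M ⊗ carrier A) ∘ mmap P (f (carrier M ⊗ carrier A)))).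
  { rewrite <- e, <- !cmp_assoc. f_equal. exact (proj1 Hc'). }
  pose proof (coeq_precomp_iso _ _ _ _ _ _ ki _ Hd k1 k2 Ea Eb Ec) as He.
  exact (coeq_iso Hc' He chi e).
Qed.
End CoreL.

Lemma und_tensm {C : SMCat} {T : Bimonad C} {M M' N N' : EM T} (h : hom (EM T) M M') (k : hom (EM T) N N') :
  und (alg_tensm h k) = und h ⊗m und k.
Proof. reflexivity. Qed.

Lemma calc_l {C : SMCat} (B : Bimonad C) {X Y FM FQ FN : C} (u : hom C X FM) (v : hom C Y FQ)
  (aM : hom C (B FM) FM) (aQ : hom C (B FQ) FQ) (e : hom C FQ FN) (aN : hom C (B Y) FN)
  (H : e ∘ aQ ∘ mmap B v = aN) :
  (idm FM ⊗m e) ∘ (aM ⊗m aQ) ∘ (mmap B u ⊗m mmap B v) ∘ T2 B X Y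
  = ((aM ∘ mmap B u) ⊗m idm FN) ∘ ((idm (B X) ⊗m aN) ∘ T2 B X Y).
Proof. rewrite <- H. nrm. tmerge. rewrite !cmp_idl, !cmp_idr. nrm. reflexivity. Qed.

Lemma calc_r {C : SMCat} (B : Bimonad C) {X Y FM FQ FN : C} (u : hom C X FM) (v : hom C Y FQ)
  (aM : hom C (B FM) FM) (aQ : hom C (B FQ) FQ) (e : hom C FQ FN) (aN : hom C (B Y) FN)
  (H : e ∘ aQ ∘ mmap B v = aN) :
  (e ⊗m idm FM) ∘ (aQ ⊗m aM) ∘ (mmap B v ⊗m mmap B u) ∘ T2 B Y X
  = (idm FN ⊗m (aM ∘ mmap B u)) ∘ ((aN ⊗m idm (B X)) ∘ T2 B Y X).
Proof. rewrite <- H. nrm. tmerge. rewrite !cmp_idl, !cmp_idr. nrm. reflexivity. Qed.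

Section FinalL.
Context {C : SMCat} {T P : Bimonad C} (f : BimonadMor T P)
  (HRC : has_reflexive_coequalizers C) (HP : monad_preserves_rc P)
  (adj : Adjunction (fstar f)).
Local Notation U := (fstar f).
Local Notation F := (ladj adj).

Lemma und_mu_cq (N : EM T) : und (mu (cross_quotient adj) N) = ueps f adj (F N).
Proof. reflexivity. Qed.
Lemma und_str_inv (A B : EM P) : und (fstar_str_inv f A B) = idm (carrier A ⊗ carrier B).
Proof. reflexivity. Qed.
Lemma und_str (A B : EM P) : und (fstar_str f A B) = idm (carrier A ⊗ carrier B).
Proof. reflexivity. Qed.
Lemma und_fstar {A B : EM P} (x : hom (EM P) A B) : und (fm U x) = und x.
Proof. reflexivity. Qed.
Lemma und_counit (A : EM P) : und (adj_counit adj A) = ueps f adj A.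
Proof. reflexivity. Qed.
Lemma und_fmF {X Y : EM T} (h : hom (EM T) X Y) : und (fm F h) = uF f adj h.
Proof. reflexivity. Qed.
Lemma und_unit (X : EM T) : und (adj_unit adj X) = ueta f adj X.
Proof. reflexivity. Qed.

Variables (Ht : tensor_preserves_rc_left C) (HPl : leftHopf P) (HTl : leftHopf T).
Lemma cq_left : cq_leftHopf adj.
Proof.
  intros M N. apply iso_EM.
  refine (core_left f Ht HPl HTl M (F N) (cM f adj M) (CEQ f HRC HP adj M)
            (cM f adj (alg_tens M (U (F N)))) (CEQ f HRC HP adj (alg_tens M (U (F N)))) _ _).
  rewrite und_cmp, und_tensm, und_idm, und_mu_cq. unfold cq_T2.
  change (cross_quotient adj N) with (U (F N)). change (cross_quotient adj M) with (U (F M)).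
  set (K := fstar_str f (F M) (F (U (F N))) ∘ alg_tensm (adj_unit adj M) (adj_unit adj (U (F N)))).
  rewrite !und_cmp, und_str_inv.
  change (und (fm U (adj_counit adj (alg_tens (F M) (F (U (F N)))) ∘ fm F K))) with (ueps f adj (alg_tens (F M) (F (U (F N)))) ∘ uF f adj K).
  unfold cM. nrm. rewrite cmp_idr.
  lrwr (uF_lin f adj K).
  lrwr (mmap_cmp _ P _ _ _ (ueta f adj (alg_tens M (U (F N)))) (uF f adj K)).
  rewrite (unit_natC f adj _ _ K), mmap_cmp. nrm.
  lrwr (eps_linC f adj (alg_tens (F M) (F (U (F N))))).
  lrwr (mmap_cmp _ P _ _ _ (ueta f adj (U (alg_tens (F M) (F (U (F N)))))) (ueps f adj (alg_tens (F M) (F (U (F N)))))).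
  rewrite tri_rC, mmap_id, cmp_idr.
  unfold K. rewrite und_cmp, und_str, und_tensm, !und_unit, cmp_idl.
  change (act (alg_tens (F M) (F (U (F N))))) with
    ((act (F M) ⊗m act (F (U (F N)))) ∘ T2 P (carrier (F M)) (carrier (F (U (F N))))).
  nrm. lrw (T2_nat _ P _ _ _ _ (ueta f adj M) (ueta f adj (U (F N)))).
  exact (calc_l P (ueta f adj M) (ueta f adj (U (F N))) (act (F M)) (act (F (U (F N))))
    (ueps f adj (F N)) (act (F N)) (act_repr f adj (F N))).
Qed.
End FinalL.

Section CoreR.
Context {C : SMCat} {T P : Bimonad C} (f : BimonadMor T P)
  (Ht : tensor_preserves_rc_right C) (HPr : rightHopf P) (HTr : rightHopf T).

Variables (A : Alg P) (N : Alg T).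
Definition kapr (X : C) : hom C (P (carrier A ⊗ X)) (carrier A ⊗ P X) :=
  (act A ⊗m idm (P X)) ∘ T2 P (carrier A) X.
Definition rhor : hom C (T (carrier A ⊗ carrier N)) (carrier A ⊗ T (carrier N)) :=
  ((act A ∘ f (carrier A)) ⊗m idm (T (carrier N))) ∘ T2 T (carrier A) (carrier N).

Lemma kapr_nat (X Y : C) (g : hom C X Y) :
  kapr Y ∘ mmap P (idm (carrier A) ⊗m g) = (idm (carrier A) ⊗m mmap P g) ∘ kapr X.
Proof.
  unfold kapr. rewrite <- cmp_assoc, T2_nat, mmap_id. nrm. tmerge.
  rewrite !cmp_idl, !cmp_idr. reflexivity.
Qed.

Lemma kapr_mu : kapr (carrier N) ∘ mu P (carrier A ⊗ carrier N)
  = (idm (carrier A) ⊗m mu P (carrier N)) ∘ kapr (P (carrier N)) ∘ mmap P (kapr (carrier N)).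
Proof.
  unfold kapr. rewrite <- cmp_assoc, mu_T2. nrm. tmerge.
  rewrite mmap_cmp. nrm. lrw (T2_nat _ P _ _ _ _ (act A) (idm (P (carrier N)))).
  rewrite !mmap_id. tmerge. rewrite <- act_mu, !cmp_idl, !cmp_idr. reflexivity.
Qed.

Lemma kapr_f : kapr (carrier N) ∘ f (carrier A ⊗ carrier N) = (idm (carrier A) ⊗m f (carrier N)) ∘ rhor.
Proof.
  unfold kapr, rhor. rewrite <- cmp_assoc, bmor_T2. nrm. tmerge.
  rewrite !cmp_idl, !cmp_idr. reflexivity.
Qed.

Lemma actM'r : act (alg_tens (fstar f A) N) = (idm (carrier A) ⊗m act N) ∘ rhor.
Proof.
  change (((act A ∘ f (carrier A)) ⊗m act N) ∘ T2 T (carrier A) (carrier N) = (idm (carrier A) ⊗m act N) ∘ rhor).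
  unfold rhor. nrm. tmerge. rewrite cmp_idl, cmp_idr. reflexivity.
Qed.

Lemma core_right {Z Q1 : C} (cm : hom C (P (carrier N)) Z)
  (Hcm : is_coequalizer (mmap P (act N)) (mu P (carrier N) ∘ mmap P (f (carrier N))) cm)
  (c' : hom C (P (carrier A ⊗ carrier N)) Q1)
  (Hc' : is_coequalizer (mmap P (act (alg_tens (fstar f A) N)))
           (mu P (carrier A ⊗ carrier N) ∘ mmap P (f (carrier A ⊗ carrier N))) c')
  (chi : hom C Q1 (carrier A ⊗ Z))
  (e : chi ∘ c' = (idm (carrier A) ⊗m cm) ∘ kapr (carrier N)) : is_iso chi.
Proof.
  destruct (kappa_r_iso P HPr (carrier N) (carrier A) (act A) (act_eta _ _ A) (act_mu _ _ A))
    as [ki [k1 k2]]. fold (kapr (carrier N)) in k1, k2.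
  destruct (kappa_r_iso P HPr (T (carrier N)) (carrier A) (act A) (act_eta _ _ A) (act_mu _ _ A))
    as [ki' [k1' k2']]. fold (kapr (T (carrier N))) in k1', k2'.
  destruct (kappa_r_iso T HTr (carrier N) (carrier A) (act A ∘ f (carrier A))
    (act_eta _ _ (fstar f A)) (act_mu _ _ (fstar f A))) as [ri [r1 r2]]. fold rhor in r1, r2.
  pose proof (Ht _ _ _ _ _ cm (carrier A) (reflM f N) Hcm) as Hd.
  assert (Ea : kapr (carrier N) ∘ mmap P (act (alg_tens (fstar f A) N)) ∘ (mmap P ri ∘ ki')
              = idm (carrier A) ⊗m mmap P (act N)).
  { rewrite actM'r, mmap_cmp. nrm. lrw (kapr_nat _ _ (act N)).
    lrwr (mmap_cmp _ P _ _ _ ri rhor). rewrite r2, mmap_id, cmp_idr. lrw k2'. rewrite cmp_idr. reflexivity. }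
  assert (Eb : kapr (carrier N) ∘ (mu P (carrier A ⊗ carrier N) ∘ mmap P (f (carrier A ⊗ carrier N)))
                 ∘ (mmap P ri ∘ ki')
              = idm (carrier A) ⊗m (mu P (carrier N) ∘ mmap P (f (carrier N)))).
  { nrm. rewrite kapr_mu. lrwr (mmap_cmp _ P _ _ _ (f (carrier A ⊗ carrier N)) (kapr (carrier N))).
    rewrite kapr_f, mmap_cmp. nrm. lrw (kapr_nat _ _ (f (carrier N))).
    lrwr (mmap_cmp _ P _ _ _ ri rhor). rewrite r2, mmap_id, cmp_idr. lrw k2'. rewrite cmp_idr.
    tmerge. rewrite cmp_idl. reflexivity. }
  assert (Ec : idm (carrier A) ⊗m cm ∘ kapr (carrier N) ∘ mmap P (act (alg_tens (fstar f A) N))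
             = idm (carrier A) ⊗m cm ∘ kapr (carrier N) ∘ (mu P (carrier A ⊗ carrier N) ∘ mmap P (f (carrier A ⊗ carrier N)))).
  { rewrite <- e, <- !cmp_assoc. f_equal. exact (proj1 Hc'). }
  pose proof (coeq_precomp_iso _ _ _ _ _ _ ki _ Hd k1 k2 Ea Eb Ec) as He.
  exact (coeq_iso Hc' He chi e).
Qed.
End CoreR.

Section FinalR.
Context {C : SMCat} {T P : Bimonad C} (f : BimonadMor T P)
  (HRC : has_reflexive_coequalizers C) (HP : monad_preserves_rc P)
  (adj : Adjunction (fstar f)).
Local Notation U := (fstar f).
Local Notation F := (ladj adj).
Variables (Ht : tensor_preserves_rc_right C) (HPr : rightHopf P) (HTr : rightHopf T).

Lemma cq_right : cq_rightHopf adj.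
Proof.
  intros M N. apply iso_EM.
  refine (core_right f Ht HPr HTr (F M) N (cM f adj N) (CEQ f HRC HP adj N)
            (cM f adj (alg_tens (U (F M)) N)) (CEQ f HRC HP adj (alg_tens (U (F M)) N)) _ _).
  rewrite und_cmp, und_tensm, und_idm, und_mu_cq. unfold cq_T2.
  change (cross_quotient adj N) with (U (F N)). change (cross_quotient adj M) with (U (F M)).
  set (K := fstar_str f (F (U (F M))) (F N) ∘ alg_tensm (adj_unit adj (U (F M))) (adj_unit adj N)).
  rewrite (und_cmp (fstar_str_inv f (F (U (F M))) (F N))). rewrite und_str_inv.
  change (und (fm U (adj_counit adj (alg_tens (F (U (F M))) (F N)) ∘ fm F K))) with (ueps f adj (alg_tens (F (U (F M))) (F N)) ∘ uF f adj K).
  unfold cM. nrm. rewrite cmp_idr.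
  lrwr (uF_lin f adj K).
  lrwr (mmap_cmp _ P _ _ _ (ueta f adj (alg_tens (U (F M)) N)) (uF f adj K)).
  rewrite (unit_natC f adj _ _ K), mmap_cmp. nrm.
  lrwr (eps_linC f adj (alg_tens (F (U (F M))) (F N))).
  lrwr (mmap_cmp _ P _ _ _ (ueta f adj (U (alg_tens (F (U (F M))) (F N)))) (ueps f adj (alg_tens (F (U (F M))) (F N)))).
  rewrite tri_rC, mmap_id, cmp_idr.
  unfold K. rewrite und_cmp, und_str, und_tensm, !und_unit, cmp_idl.
  change (act (alg_tens (F (U (F M))) (F N))) with
    ((act (F (U (F M))) ⊗m act (F N)) ∘ T2 P (carrier (F (U (F M)))) (carrier (F N))).
  nrm. lrw (T2_nat _ P _ _ _ _ (ueta f adj (U (F M))) (ueta f adj N)).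
  exact (calc_r P (ueta f adj N) (ueta f adj (U (F M))) (act (F N)) (act (F (U (F M))))
    (ueps f adj (F M)) (act (F M)) (act_repr f adj (F M))).
Qed.
End FinalR.

Theorem mainTheorem11 :
  (forall (C : SMCat) (T P : Bimonad C) (f : BimonadMor T P),
     has_reflexive_coequalizers C ->
     tensor_preserves_rc_left C ->
     leftHopf T -> leftHopf P ->
     monad_preserves_rc T -> monad_preserves_rc P ->
     cross_quotientable f /\
     (forall adj : Adjunction (fstar f), cq_leftHopf adj))
  /\
  (forall (C : SMCat) (T P : Bimonad C) (f : BimonadMor T P),
     has_reflexive_coequalizers C ->
     tensor_preserves_rc_right C ->
     rightHopf T -> rightHopf P ->
     monad_preserves_rc T -> monad_preserves_rc P ->
     cross_quotientable f /\
     (forall adj : Adjunction (fstar f), cq_rightHopf adj)).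
Proof.
  split.
  - intros C T P f HRC Ht HTl HPl _ HP. split.
    + exact (monadic_fstar f HRC HP).
    + intros adj. exact (cq_left f HRC HP adj Ht HPl HTl).
  - intros C T P f HRC Ht HTr HPr _ HP. split.
    + exact (monadic_fstar f HRC HP).
    + intros adj. exact (cq_right f HRC HP adj Ht HPr HTr).
Qed.
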